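(* Let $d,w \ge 1$ be integers and let $h_1,\dots,h_d$ be fixed functions from the item universe $\mathcal{U}$ to $\{1,\dots,w\}$. Let $\sigma_1$ and $\sigma_2$ be two finite streams of occurrences of items of $\mathcal{U}$, each occurrence carrying a positive real (decayed) weight, and let $\sigma=\sigma_1\sigma_2$ be their concatenation. For a stream $\tau$ and a cell $(i,j)$ with $1\le i\le d$, $1\le j\le w$, let $\tau^{(i,j)}$ be the sub-stream of occurrences of items $e$ with $h_i(e)=j$, let $f_{\tau^{(i,j)}}(e)$ be the sum of the weights of the occurrences of $e$ in $\tau^{(i,j)}$, and let $|\tau^{(i,j)}|=\sum_e f_{\tau^{(i,j)}}(e)$ be its total decayed count. Call a two-counter summary $\mathcal{S}=(\Sigma,\hat f_{\mathcal{S}})$ (a set $\Sigma$ of at most $2$ monitored items with estimates $\hat f_{\mathcal{S}}(e)>0$, $e\in\Sigma$; let $\hat f^{min}_{\mathcal{S}}=\min_{e\in\Sigma}\hat f_{\mathcal{S}}(e)$ if $|\Sigma|=2$ and $\hat f^{min}_{\mathcal{S}}=0$ if $|\Sigma|<2$; let $|\mathcal{S}|=\sum_{e\in\Sigma}\hat f_{\mathcal{S}}(e)$) \emph{valid} for a weighted stream $\tau$ with decayed frequencies $f_\tau$ if: (i) $|\mathcal{S}|=|\tau|$; (ii) $\hat f_{\mathcal{S}}(e)-\hat f^{min}_{\mathcal{S}}\le f_\tau(e)\le \hat f_{\mathcal{S}}(e)$ for every $e\in\Sigma$; (iii) $f_\tau(e)\le \hat f^{min}_{\mathcal{S}}$ for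 every item $e\notin\Sigma$; (iv) $\hat f^{min}_{\mathcal{S}}\le |\tau|/2$. Suppose $D_1$ and $D_2$ are $d\times w$ sketches such that, for every cell $(i,j)$, $D_1[i][j]=\mathcal{S}_1=(\Sigma_1,\hat f_{\mathcal{S}_1})$ is a two-counter summary valid for $\sigma_1^{(i,j)}$ and $D_2[i][j]=\mathcal{S}_2=(\Sigma_2,\hat f_{\mathcal{S}_2})$ is a two-counter summary valid for $\sigma_2^{(i,j)}$. Define the merged sketch $G$ cell by cell as follows: form the combined summary $\mathcal{S}_C$ on $\Sigma_C=\Sigma_1\cup\Sigma_2$ by $\hat f_{\mathcal{S}_C}(e)=\hat f_{\mathcal{S}_1}(e)+\hat f_{\mathcal{S}_2}(e)$ for $e\in\Sigma_1\cap\Sigma_2$, $\hat f_{\mathcal{S}_C}(e)=\hat f_{\mathcal{S}_1}(e)+\hat f^{min}_{\mathcal{S}_2}$ for $e\in\Sigma_1\setminus\Sigma_2$, $\hat f_{\mathcal{S}_C}(e)=\hat f_{\mathcal{S}_2}(e)+\hat f^{min}_{\mathcal{S}_1}$ for $e\in\Sigma_2\setminus\Sigma_1$; then, if $|\Sigma_C|>2$, let $G[i][j]=\mathcal{S}_M$ retain only the $2$ items of $\Sigma_C$ with the greatest values of $\hat f_{\mathcal{S}_C}$ (with those values), and otherwise let $G[i][j]=\mathcal{S}_M=\mathcal{S}_C$. Then for every cell $(i,j)$, the merged summary $G[i][j]$ is a two-counter summary valid for $\sigma^{(i,j)}$; in particular the sum of its counters equals the total decayed count $|\sigma^{(i,j)}|=|\sigma_1^{(i,j)}|+|\sigma_2^{(i,j)}|$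 of the items of $\sigma$ mapped to that cell.
   Context: This is the merge operation of PFDCMSS, a parallel algorithm for time-faded heavy hitters. Each stream occurrence of an item $v$ with timestamp $t_v$ carries a (non-normalized forward) decayed weight $g(t_v-L)$ for a positive monotone non-decreasing function $g$ and landmark time $L$; only positivity of the weights matters here. An FDCMSS sketch is a $d\times w$ array, each cell of which holds a Space Saving summary with exactly two counters (a counter with value $0$ monitors no item), maintaining the items mapped to that cell by the row hash function $h_i$. Property (i) (''1-norm equivalence'') says the counters in a cell sum to the same value a Count--Min sketch counter for that cell would hold. *)

(* Defs.v *)
From HB Require Import structures.
From mathcomp Require Import all_boot all_order all_algebra.
Set Implicit Arguments. Unset Strict Implicit. Unset Printing Implicit Defensive.
Import Order.TTheory GRing.Theory Num.Theory.
Local Open Scope ring_scope.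

Section Defs.
Variables (U : eqType) (R : realFieldType).

Definition stream := seq (U * R).

Definition pos_weights (tau : stream) : bool := all (fun p => 0 < p.2) tau.

Definition freq (tau : stream) (e : U) : R := \sum_(p <- tau | p.1 == e) p.2.

(* total decayed count |tau| = sum_e f_tau(e) = sum of all weights *)
Definition tot (tau : stream) : R := \sum_(p <- tau) p.2.

Definition substream (d w : nat) (h : 'I_d -> U -> 'I_w)
  (tau : stream) (i : 'I_d) (j : 'I_w) : stream :=
  [seq p <- tau | h i p.1 == j].

(* A summary: the list of monitored items Sigma and the estimate function
   (only its values on Sigma are meaningful). *)
Record summary := Summary { items : seq U; est : U -> R }.

Definition two_counter (S : summary) : Prop :=
  [/\ uniq (items S), (size (items S) <= 2)%N & forall e, e \in items S -> 0 < est S e].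

Definition fmin (S : summary) : R :=
  if items S is [:: a; b] then Num.min (est S a) (est S b) else 0.

Definition ssum (S : summary) : R := \sum_(e <- items S) est S e.

Definition valid (S : summary) (tau : stream) : Prop :=
  [/\ ssum S = tot tau,
      (forall e, e \in items S -> est S e - fmin S <= freq tau e <= est S e),
      (forall e, e \notin items S -> freq tau e <= fmin S)
    & fmin S <= tot tau / 2].

Definition comb_items (S1 S2 : summary) : seq U := undup (items S1 ++ items S2).

Definition comb_est (S1 S2 : summary) (e : U) : R :=
  if (e \in items S1) && (e \in items S2) then est S1 e + est S2 e
  else if e \in items S1 then est S1 e + fmin S2
  else est S2 e + fmin S1.

(* SM is a merge of S1 and S2: if |Sigma_C| > 2, SM retains 2 items of Sigma_C
   with the greatest combined values (any tie-breaking), otherwise SM = S_C.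
   Estimates are the combined ones. *)
Definition merged (S1 S2 SM : summary) : Prop :=
  (forall e, est SM e = comb_est S1 S2 e) /\
  (if (2 < size (comb_items S1 S2))%N then
     [/\ uniq (items SM), size (items SM) = 2%N,
         {subset items SM <= comb_items S1 S2} &
         forall x y, x \in items SM -> y \in comb_items S1 S2 -> y \notin items SM ->
           comb_est S1 S2 y <= comb_est S1 S2 x]
   else items SM = comb_items S1 S2).

End Defs.

(* Main.v *)
Require Import Defs.
From HB Require Import structures.
From mathcomp Require Import all_boot all_order all_algebra.
From mathcomp Require Import lra.
Set Implicit Arguments. Unset Strict Implicit. Unset Printing Implicit Defensive.
Import Order.TTheory GRing.Theory Num.Theory.
Local Open Scope ring_scope.

Section S.
Variables (U : eqType) (R : realFieldType).

Lemma min_cases (x y : R) :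
  (Num.min x y = x /\ x <= y) \/ (Num.min x y = y /\ y <= x).
Proof. by case: (leP x y) => h; [left|right; split=> //; apply: ltW]. Qed.

Lemma fmin2 (f : U -> R) a b : exists2 m, fmin (Summary [:: a; b] f) = m &
  ((m = f a /\ m <= f b) \/ (m = f b /\ m <= f a)).
Proof.
exists (fmin (Summary [:: a; b] f)) => //; rewrite /fmin /=.
by case: (leP (f a) (f b)) => h; [left|right; split=> //; apply: ltW].
Qed.

Lemma pos_all (f : U -> R) (s : seq U) :
  (forall e, e \in s -> 0 < f e) -> all (fun e => 0 < f e) s.
Proof. by move=> h; apply/allP. Qed.

Lemma drop_all (F : U -> R) (sm C : seq U) :
  (forall x0 y0, x0 \in sm -> y0 \in C -> y0 \notin sm -> F y0 <= F x0) ->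
  all (fun y0 => (y0 \notin sm) ==> all (fun x0 => F y0 <= F x0) sm) C.
Proof.
move=> h; apply/allP => y yC; apply/implyP => yn; apply/allP => x xs.
exact: h.
Qed.

Lemma sum2_wlog (F : U -> R) (C : seq U) (rhs : R) :
  (forall x y, x != y -> x \in C -> y \in C -> (index x C < index y C)%N ->
     (forall x0 y0, x0 \in [:: x; y] -> y0 \in C -> y0 \notin [:: x; y] -> F y0 <= F x0) ->
     F x + (F y + 0) = rhs) ->
  forall x y, x != y -> x \in C -> y \in C ->
     (forall x0 y0, x0 \in [:: x; y] -> y0 \in C -> y0 \notin [:: x; y] -> F y0 <= F x0) ->
     F x + (F y + 0) = rhs.
Proof.
move=> W x y hu hx hy hd.
case: (ltngtP (index x C) (index y C)) => l; first exact: W.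
  rewrite addrCA; apply: W => //; first by rewrite eq_sym.
  move=> x0 y0 h0 h1 h2; apply: hd => //.
    by move: h0; rewrite !inE orbC.
  by move: h2; rewrite !inE orbC.
have := nth_index x hx; rewrite l nth_index // => E.
by rewrite E eqxx in hu.
Qed.

Ltac kill := match goal with
  | H : is_true (?x != ?x) |- _ => by rewrite eqxx in H
  | _ => idtac end.

Ltac simp_eq := repeat match goal with
  | H : is_true (?x != ?y) |- context[?x == ?y] => rewrite (negbTE H)
  | H : is_true (?x != ?y) |- context[?y == ?x] => rewrite [y == x]eq_sym (negbTE H)
  | |- context[?x == ?x] => rewrite eqxx
  end.

Ltac simp_all := repeat (rewrite /= ?inE; simp_eq); rewrite /=.

Ltac splitand := repeat match goal with
  | H : is_true (_ && _) |- _ => let H1 := fresh "h" in let H2 := fresh "h" in case/andP: H => H1 H2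
  | H : is_true true |- _ => clear H
  end.

Ltac destr_mem H :=
  rewrite ?inE in H; repeat (case/orP: H => H); move/eqP: H => H;
  match type of H with ?u = ?v => subst u end; kill.

Ltac genmin := repeat match goal with
  | |- context[Num.min ?x ?y] => let m := fresh "m" in set m := Num.min x y in *; clearbody m
  | H : context[Num.min ?x ?y] |- _ => let m := fresh "m" in set m := Num.min x y in *; clearbody m
  end.
Ltac fin := repeat match goal with H : _ \/ _ |- _ => case: H => [[? ?]|[? ?]] end; genmin; lra.

Ltac cases2 x a := case: (eqVneq x a) => [?|?]; [subst x|]; kill.

Ltac cv F v := have: F v = F v by []; rewrite {2}/F /comb_est;
  repeat match goal with H : fmin _ = _ |- _ => rewrite H end;
  rewrite /fmin /= ?inE; simp_eq; rewrite /= => ?.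

Lemma merge_sum (S1 S2 SM : summary U R) :
  two_counter S1 -> two_counter S2 -> merged S1 S2 SM ->
  ssum SM = ssum S1 + ssum S2.
Proof.
case: S1 => s1 f1; case: S2 => s2 f2; case: SM => sm fm.
rewrite /two_counter /merged /ssum /=.
move=> [u1 z1 /pos_all p1] [u2 z2 /pos_all p2] [hfm hpr].
under eq_bigr do rewrite hfm. clear hfm.
case: s1 u1 z1 p1 hpr => [|a [|b [|? ?]]] //= u1 _ p1 hpr;
case: s2 u2 z2 p2 hpr => [|c [|e [|? ?]]] //= u2 _ p2 hpr;
rewrite ?inE ?andbT in u1 u2; splitand;
rewrite /comb_items in hpr *;
set F := (comb_est _ _) in hpr *;
try (case: (fmin2 f1 a b) => m1 Em1 Hm1);
try (case: (fmin2 f2 c e) => m2 Em2 Hm2);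
idtac.
all: try cases2 c a; try cases2 c b; try cases2 e a; try cases2 e b.
all: try cv F a; try cv F b; try cv F c; try cv F e;
  clearbody F; try clear Em1; try clear Em2.
all: move: hpr; simp_all => hpr.
all: match type of hpr with
     | _ = _ => subst sm; rewrite ?big_cons ?big_nil; fin
     | _ => idtac end.
all: case: hpr => hu hs hsub hd.
all: case: sm hu hs hsub hd => [|x [|y [|? ?]]] //= hu _ hsub hd.
all: have hx := hsub x (mem_head _ _); have hy : y \in [:: x; y] by rewrite !inE eqxx orbT.
all: move/hsub: hy => hy; rewrite ?inE ?andbT in hu.
all: rewrite !big_cons !big_nil.
all: move: hu hx hy hd; apply: sum2_wlog; clear hsub; move=> {}x {}y hu hx hy lt /drop_all hd.
all: destr_mem hx.
all: destr_mem hy.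
all: move: lt; simp_all => lt.
all: try by [].
all: move: hd; simp_all => hd; splitand.
all: fin.
Qed.

Lemma freq_ge0 (t : stream U R) e : pos_weights t -> 0 <= freq t e.
Proof.
move=> /allP H; rewrite /freq big_seq_cond; apply: sumr_ge0 => p /andP[pt _].
exact: ltW (H p pt).
Qed.

Lemma tot_ge0 (t : stream U R) : pos_weights t -> 0 <= tot t.
Proof.
move=> /allP H; rewrite /tot big_seq; apply: sumr_ge0 => p pt.
exact: ltW (H p pt).
Qed.

Lemma pos_sub d w (h : 'I_d -> U -> 'I_w) (t : stream U R) i j :
  pos_weights t -> pos_weights (substream h t i j).
Proof.
move=> /allP H; apply/allP => p; rewrite mem_filter => /andP[_ pt]; exact: H.
Qed.

Lemma fmin_ge0 (S : summary U R) : two_counter S -> 0 <= fmin S.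
Proof.
case: S => s f; rewrite /two_counter /fmin /= => -[_ _ p].
case: s p => [|a [|b [|? ?]]] //= p.
have ha : 0 < f a by apply: p; rewrite inE eqxx.
have hb : 0 < f b by apply: p; rewrite !inE eqxx orbT.
by rewrite le_min !ltW.
Qed.

Lemma fmin_le (S : summary U R) e : two_counter S -> e \in items S -> fmin S <= est S e.
Proof.
case: S => s f; rewrite /two_counter /fmin /= => -[_ _ p] es.
have pe := p e es.
case: s p es => [|a [|b [|? ?]]] //= p es; try exact: ltW.
rewrite !inE in es; case/orP: es => /eqP ->; by rewrite ge_min lexx ?orbT.
Qed.

Lemma fmin_small (S : summary U R) : (size (items S) < 2)%N -> fmin S = 0.
Proof. by case: S => s f; rewrite /fmin /=; case: s => [|a [|b [|? ?]]]. Qed.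


Lemma comb_props (S1 S2 : summary U R) (t1 t2 : stream U R) :
  two_counter S1 -> two_counter S2 -> valid S1 t1 -> valid S2 t2 ->
  pos_weights t1 -> pos_weights t2 ->
  forall e,
  (e \in comb_items S1 S2 ->
    [/\ 0 < comb_est S1 S2 e, fmin S1 + fmin S2 <= comb_est S1 S2 e &
        comb_est S1 S2 e - (fmin S1 + fmin S2) <= freq t1 e + freq t2 e <= comb_est S1 S2 e])
  /\ (e \notin comb_items S1 S2 -> freq t1 e + freq t2 e <= fmin S1 + fmin S2).
Proof.
move=> tc1 tc2 [_ v1b v1c _] [_ v2b v2c _] pw1 pw2 e.
have g1 := fmin_ge0 tc1; have g2 := fmin_ge0 tc2.
have q1 := freq_ge0 e pw1; have q2 := freq_ge0 e pw2.
rewrite /comb_items mem_undup mem_cat /comb_est; split.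
  have [_ _ p1] := tc1; have [_ _ p2] := tc2.
  case E1: (e \in items S1); case E2: (e \in items S2) => //= _.
  - have := v1b e E1; have := v2b e E2; have := fmin_le tc1 E1; have := fmin_le tc2 E2.
    have := p1 e E1; have := p2 e E2.
    move=> ? ? ? ? /andP[? ?] /andP[? ?]; split; lra.
  - have := v1b e E1; have := v2c e (negbT E2); have := fmin_le tc1 E1.
    have := p1 e E1.
    move=> ? ? ? /andP[? ?]; split; lra.
  - have := v2b e E2; have := v1c e (negbT E1); have := fmin_le tc2 E2.
    have := p2 e E2.
    move=> ? ? ? /andP[? ?]; split; lra.
rewrite negb_or => /andP[n1 n2].
have := v1c e n1; have := v2c e n2; lra.
Qed.

End S.

Unset Implicit Arguments.

Theorem theorem3 (U : eqType) (R : realFieldType) (d w : nat)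
  (h : 'I_d -> U -> 'I_w) (sigma1 sigma2 : stream U R)
  (D1 D2 G : 'I_d -> 'I_w -> summary U R) :
  (0 < d)%N -> (0 < w)%N ->
  pos_weights sigma1 -> pos_weights sigma2 ->
  (forall i j, two_counter (D1 i j) /\ valid (D1 i j) (substream h sigma1 i j)) ->
  (forall i j, two_counter (D2 i j) /\ valid (D2 i j) (substream h sigma2 i j)) ->
  (forall i j, merged (D1 i j) (D2 i j) (G i j)) ->
  forall i j,
    [/\ two_counter (G i j),
        valid (G i j) (substream h (sigma1 ++ sigma2) i j)
      & ssum (G i j) = tot (substream h sigma1 i j) + tot (substream h sigma2 i j)].
Proof.
move=> _ _ pw1 pw2 H1 H2 HG i j.
have [tc1 v1] := H1 i j; have [tc2 v2] := H2 i j; have hm := HG i j.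
have esum := merge_sum tc1 tc2 hm.
move: (pos_sub h i j pw1) (pos_sub h i j pw2) tc1 tc2 v1 v2 hm esum.
rewrite /substream filter_cat -/(substream h sigma1 i j) -/(substream h sigma2 i j).
move: (substream h sigma1 i j) (substream h sigma2 i j) => t1 t2.
move: (D1 i j) (D2 i j) (G i j) => S1 S2 SM {H1 H2 HG}.
move=> p1 p2 tc1 tc2 v1 v2 hm esum.
have cp := comb_props tc1 tc2 v1 v2 p1 p2.
have totE : tot (t1 ++ t2) = tot t1 + tot t2 by rewrite /tot big_cat.
have freqE : forall e, freq (t1 ++ t2) e = freq t1 e + freq t2 e.
  by move=> e; rewrite /freq big_cat.
case: v1 => v1a _ _ _; case: v2 => v2a _ _ _.
have sumE : ssum SM = tot t1 + tot t2 by rewrite esum v1a v2a.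
case: hm => hest hpr.
set M := fmin S1 + fmin S2.
set C := comb_items S1 S2 in hpr cp.
have subC : {subset items SM <= C}.
  by case: (2 < size C)%N hpr => [[]|->].
have MleSM : M <= fmin SM.
  case E: (size (items SM) == 2)%N.
    case: SM hest hpr subC E {sumE esum} => sm fm /= hest hpr subC.
    case: sm hpr subC => [|x [|y [|? ?]]] //= hpr subC _.
    rewrite /fmin /= !hest le_min.
    have [/(_ (subC x _)) + _] := cp x.
    rewrite inE eqxx => /(_ isT) [_ -> _].
    have [/(_ (subC y _)) + _] := cp y.
    by rewrite !inE eqxx orbT => /(_ isT) [_ -> _].
  have hC : items SM = C.
    by case: (2 < size C)%N hpr => [[_ /eqP]|->]; rewrite ?E.
  have sC : (size C < 2)%N.
    case: (ltnP 2 (size C)) hpr => [_ [_ /eqP]|]; first by rewrite E.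
    by move: E; rewrite hC leq_eqVlt => -> .
  rewrite fmin_small; last by rewrite hC.
  have s1C : (size (items S1) < 2)%N.
    apply: leq_ltn_trans sC; apply: uniq_leq_size; first by case: tc1.
    by move=> e es; rewrite /C /comb_items mem_undup mem_cat es.
  have s2C : (size (items S2) < 2)%N.
    apply: leq_ltn_trans sC; apply: uniq_leq_size; first by case: tc2.
    by move=> e es; rewrite /C /comb_items mem_undup mem_cat es orbT.
  by rewrite /M !fmin_small // addr0.
have tcSM : two_counter SM.
  split.
  - by case: (2 < size C)%N hpr => [[]|->] //; exact: undup_uniq.
  - case: (ltnP 2 (size C)) hpr => [_ [_ -> //]| le ->] //.
  - move=> e /subC eC; rewrite hest; by have [/(_ eC) [] ] := cp e.
have sz2 : (size (items SM) <= 2)%N by case: tcSM.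
split => //; split.
- by rewrite sumE totE.
- move=> e es; rewrite hest freqE.
  have [/(_ (subC e es)) [_ _ /andP[lo hi]] _] := cp e.
  rewrite hi andbT; move: MleSM lo; rewrite -/M; lra.
- move=> e en; rewrite freqE.
  case eC: (e \in C); last first.
    have [_ /(_ (negbT eC))] := cp e; move: MleSM; rewrite -/M; lra.
  case: (ltnP 2 (size C)) hpr => [_ [_ hs _ hdrop]|_ hC]; last by rewrite hC eC in en.
  have [/(_ eC) [_ _ /andP[_ hi]] _] := cp e.
  case: SM hest hs en hdrop {esum sumE MleSM subC tcSM sz2} => sm fm /= hest hs en hdrop.
  case: sm hs en hdrop => [|x [|y [|? ?]]] //= _ en hdrop.
  rewrite /fmin /= le_min !hest; apply/andP; split; apply: le_trans hi _;
    (apply: hdrop => //); by rewrite !inE eqxx ?orbT.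
-   case: (ltnP 2 (size (items SM))) => [|sz]; first by rewrite ltnNge sz2.
  move: sz; rewrite leq_eqVlt => /orP[/eqP s2|s1]; last first.
    rewrite fmin_small //; have := tot_ge0 p1; have := tot_ge0 p2; rewrite totE; lra.
  rewrite totE -sumE.
  case: SM s2 hest {hpr esum sumE MleSM subC tcSM sz2} => sm fm /= s2 hest.
  case: sm s2 => [|x [|y [|? ?]]] //= _.
  rewrite /fmin /ssum /= !big_cons big_nil.
  have [[-> ?]|[-> ?]] := min_cases (fm x) (fm y); lra.
Qed.
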